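(* Let $G$ be a weighted graph, $s\in[0,1]^V$ a vector of innate opinions, $z=(I+L)^{-1}s$ the equilibrium opinions, and $P=P(z)$. Let $k\in\mathbb{N}$ and let $s'\in[0,1]^V$ satisfy $\|s'-s\|_0\le k$. Let $z'=(I+L)^{-1}s'$ and $P'=P(z')$. Then $P'\le P+3k$.
   Context: $G=(V,E,w)$ is a weighted undirected graph on $n=|V|$ vertices, with weights $w_{u,v}\in(0,1]$ for $(u,v)\in E$ and $w_{u,v}=0$ otherwise (and $w_{v,v}=0$). $L=\mathrm{Diag}(d)-A$ is the weighted Laplacian, where $A_{u,v}=w_{u,v}$ and $d_v=\sum_u w_{v,u}$. Polarization of a vector $z\in\mathbb{R}^V$ is $P(z)=\sum_{v\in V}(z_v-\bar z)^2$ with $\bar z=\frac1n\sum_v z_v$. $\|x\|_0$ denotes the number of nonzero coordinates of $x$. *)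

(* Defs.v *)
From HB Require Import structures.
From mathcomp Require Import all_boot all_order all_algebra.
Set Implicit Arguments. Unset Strict Implicit. Unset Printing Implicit Defensive.
Import Order.TTheory GRing.Theory Num.Theory.
Local Open Scope ring_scope.

(* A weighted undirected graph: w u v in (0,1] on edges, 0 otherwise,
   symmetric, zero diagonal. Equivalently: symmetric, zero diagonal, entries in [0,1]. *)
Definition weighted_graph (R : realFieldType) (n : nat) (w : 'M[R]_n) : Prop :=
  (forall u v : 'I_n, w u v = w v u) /\
  (forall v : 'I_n, w v v = 0) /\
  (forall u v : 'I_n, 0 <= w u v <= 1).

Definition degree (R : realFieldType) (n : nat) (w : 'M[R]_n) (v : 'I_n) : R :=
  \sum_(u < n) w v u.

Definition laplacian (R : realFieldType) (n : nat) (w : 'M[R]_n) : 'M[R]_n :=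
  diag_mx (\row_v degree w v) - w.

Definition equilibrium (R : realFieldType) (n : nat) (w : 'M[R]_n) (s : 'cV[R]_n)
  : 'cV[R]_n := invmx (1%:M + laplacian w) *m s.

Definition mean (R : realFieldType) (n : nat) (z : 'cV[R]_n) : R :=
  (\sum_(v < n) z v 0) / n%:R.

Definition polarization (R : realFieldType) (n : nat) (z : 'cV[R]_n) : R :=
  \sum_(v < n) (z v 0 - mean z) ^+ 2.

Definition l0norm (R : realFieldType) (n : nat) (x : 'cV[R]_n) : nat :=
  #|[set v : 'I_n | x v 0 != 0]|.

Definition unit_cube (R : realFieldType) (n : nat) (s : 'cV[R]_n) : Prop :=
  forall v : 'I_n, 0 <= s v 0 <= 1.

(* Main.v *)
Require Import Defs.
From HB Require Import structures.
From mathcomp Require Import all_boot all_order all_algebra.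
From mathcomp Require Import ring lra.
Import Order.TTheory GRing.Theory Num.Theory.
Local Open Scope ring_scope.

Section Aux.
Variables (R : realFieldType) (n : nat) (w : 'M[R]_n).
Hypothesis Hw : weighted_graph w.

Let Mw := 1%:M + laplacian w.

Lemma Mw_entry i j : Mw i j = (1 + degree w i) *+ (i == j) - w i j.
Proof. by rewrite /Mw /laplacian !mxE mulrnDl addrA. Qed.

Lemma Mw_sym i j : Mw i j = Mw j i.
Proof. by case: Hw => S _; rewrite !Mw_entry eq_sym S; case: eqP => // ->. Qed.

Lemma Mw_mul (x : 'cV[R]_n) i :
  (Mw *m x) i 0 = x i 0 + \sum_j w i j * (x i 0 - x j 0).
Proof.
rewrite mxE.
under eq_bigr do rewrite Mw_entry mulrBl.
rewrite sumrB (bigD1 i) //= eqxx big1 => [|j]; last by rewrite eq_sym => /negbTE ->; rewrite mul0r.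
rewrite addr0 mulr1n. rewrite mulrDl mul1r /degree mulr_suml -addrA; congr (_ + _).
by rewrite -sumrB; apply: eq_bigr => j _; rewrite mulrBr.
Qed.

Definition dot (x y : 'cV[R]_n) := \sum_i x i 0 * y i 0.

Lemma dot_sym_M (x y : 'cV[R]_n) : dot y (Mw *m x) = dot (Mw *m y) x.
Proof.
rewrite /dot.
under eq_bigr do rewrite mxE mulr_sumr.
under [RHS]eq_bigr do rewrite mxE mulr_suml.
rewrite exchange_big /=; apply: eq_bigr => i _; apply: eq_bigr => j _.
by rewrite Mw_sym mulrA [y j 0 * _]mulrC.
Qed.

Lemma dot_pos (x : 'cV[R]_n) : dot x x <= dot x (Mw *m x).
Proof.
rewrite /dot.
under [X in _ <= X]eq_bigr do rewrite Mw_mul mulrDr.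
rewrite big_split /= lerDl.
set S := \sum_i _.
have -> : S = (\sum_i \sum_j w i j * (x i 0 - x j 0) ^+ 2) / 2.
  apply: (canRL (mulfK _)); first by rewrite pnatr_eq0.
  rewrite mulr_natr mulr2n.
  rewrite {2}/S; under [X in _ + X = _]eq_bigr do rewrite mulr_sumr.
  rewrite exchange_big /S /=.
  under eq_bigr do rewrite mulr_sumr.
  rewrite -big_split /=; apply: eq_bigr => i _.
  rewrite -big_split /=; apply: eq_bigr => j _.
  case: Hw => Sy _; rewrite (Sy j i); ring.
apply: divr_ge0 => //; apply: sumr_ge0 => i _; apply: sumr_ge0 => j _.
case: Hw => _ [_ B]; have /andP[B0 _] := B i j.
by apply: mulr_ge0 => //; apply: sqr_ge0.
Qed.


Lemma Mw_tr : Mw^T = Mw.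
Proof. by apply/matrixP => i j; rewrite mxE Mw_sym. Qed.

Lemma dot0 (x : 'cV[R]_n) : dot x x <= 0 -> x = 0.
Proof.
move=> H.
have H0 : dot x x = 0.
  apply: le_anti; rewrite H /=; apply: sumr_ge0 => i _; rewrite -expr2; apply: sqr_ge0.
apply/matrixP => i j; rewrite (ord1 j) mxE.
have Hp : forall k, predT k -> 0 <= x k 0 * x k 0 by move=> k _; rewrite -expr2 sqr_ge0.
have := @psumr_eq0P _ _ predT (fun i => x i 0 * x i 0) Hp H0 i isT.
by rewrite -expr2 => /eqP; rewrite sqrf_eq0 => /eqP.
Qed.

Lemma Mw_unit : Mw \in unitmx.
Proof.
rewrite unitmxE unitfE; apply/negP => /det0P [v vn0 vM0].
have Mx : Mw *m v^T = 0 by rewrite -Mw_tr -trmx_mul vM0 trmx0.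
have := dot_pos v^T; rewrite Mx /dot.
rewrite [X in _ <= X]big1 => [|i _]; last by rewrite !mxE mulr0.
move=> /dot0 /(congr1 trmx); rewrite trmxK trmx0 => v0.
by move: vn0; rewrite v0 eqxx.
Qed.

Lemma max_principle (t y : 'cV[R]_n) : Mw *m y = t ->
  (forall v, 0 <= t v 0 <= 1) -> forall v, 0 <= y v 0 <= 1.
Proof.
move=> My Ht v; apply/andP; split.
- case: (arg_minP (fun i => y i 0) (P := predT) (isT : predT v)) => m _ Hm.
  have Hv : y m 0 <= y v 0 by exact: Hm.
  apply: (le_trans _ Hv).
  have /andP[t0 _] := Ht m; apply: (le_trans t0).
  rewrite -My Mw_mul gerDl; apply: sumr_le0 => j _.
  case: Hw => _ [_ B]; have /andP[B0 _] := B m j.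
  by apply: mulr_ge0_le0 => //; rewrite subr_le0 Hm.
- case: (arg_maxP (fun i => y i 0) (P := predT) (isT : predT v)) => m _ Hm.
  have Hv : y v 0 <= y m 0 by exact: Hm.
  apply: (le_trans Hv).
  have /andP[_ t1] := Ht m; apply: (le_trans _ t1).
  rewrite -My Mw_mul lerDl; apply: sumr_ge0 => j _.
  case: Hw => _ [_ B]; have /andP[B0 _] := B m j.
  by apply: mulr_ge0 => //; rewrite subr_ge0; exact: Hm.
Qed.

End Aux.
Arguments dot {R n}.

Section Pol.
Variables (R : realFieldType) (n : nat).
Implicit Types x y : 'cV[R]_n.+1.

Lemma sum_dev x : \sum_v (x v 0 - mean x) = 0.
Proof.
rewrite sumrB sumr_const card_ord /mean -[_ *+ n.+1]mulr_natr divfK ?subrr //.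
by rewrite pnatr_eq0.
Qed.

Lemma mean_add x y : mean (x + y) = mean x + mean y.
Proof.
by rewrite /mean -mulrDl -big_split; congr (_ / _); apply: eq_bigr => v _; rewrite mxE.
Qed.

Lemma pol_add x y : polarization (x + y) =
  polarization x + 2 * \sum_v (x v 0 - mean x) * y v 0 + polarization y.
Proof.
rewrite /polarization mean_add.
have E : \sum_v (x v 0 - mean x) * y v 0 =
         \sum_v (x v 0 - mean x) * (y v 0 - mean y).
  under [RHS]eq_bigr do rewrite mulrBr.
  by rewrite sumrB -mulr_suml sum_dev mul0r subr0.
rewrite E mulr_sumr -!big_split /=; apply: eq_bigr => v _; rewrite mxE; ring.
Qed.

Lemma pol_le y : polarization y <= \sum_v y v 0 ^+ 2.
Proof.
rewrite /polarization.
have -> : \sum_v (y v 0 - mean y) ^+ 2 = \sum_v (y v 0 - mean y) * y v 0.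
  have := sum_dev y => H.
  transitivity (\sum_v ((y v 0 - mean y) * y v 0 - mean y * (y v 0 - mean y))).
    by apply: eq_bigr => v _; ring.
  by rewrite sumrB -mulr_sumr H mulr0 subr0.
under eq_bigr do rewrite mulrBl.
rewrite sumrB -mulr_sumr.
have -> : \sum_v y v 0 = mean y *+ n.+1.
  by rewrite /mean -[_ *+ n.+1]mulr_natr divfK // pnatr_eq0.
rewrite gerBl mulrnAr; apply: mulrn_wge0; by rewrite -expr2 sqr_ge0.
Qed.

End Pol.

Theorem theorem1p2 (R : realFieldType) (n : nat) (w : 'M[R]_n)
  (s s' : 'cV[R]_n) (k : nat) :
  weighted_graph w -> unit_cube s -> unit_cube s' ->
  (l0norm (s' - s) <= k)%N ->
  polarization (equilibrium w s') <= polarization (equilibrium w s) + k%:R *+ 3.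
Proof.
case: n w s s' => [|n] w s s' Hw Hs Hs' Hk.
  rewrite /polarization !big_ord0 add0r; apply: mulrn_wge0; exact: ler0n.
set M := 1%:M + laplacian w.
have Hu : M \in unitmx by exact: (@Mw_unit _ _ _ Hw).
set D := s' - s.
set a := equilibrium w s.
set b := invmx M *m D.
have Ea : equilibrium w s' = a + b by rewrite /a /b /equilibrium /D -mulmxDr [s + _]addrC subrK.
have MA : M *m a = s by rewrite /a /equilibrium mulKVmx.
have MB : M *m b = D by rewrite /b mulKVmx.
have Ha := @max_principle _ _ _ Hw _ _ MA Hs.
set c := invmx M *m a.
have Hc := @max_principle _ _ _ Hw _ _ (mulKVmx Hu a) Ha.
have HD v : -1 <= D v 0 <= 1.
  have /andP[? ?] := Hs v; have /andP[? ?] := Hs' v.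
  rewrite /D !mxE; apply/andP; split; lra.
set m := mean a.
have Hm : 0 <= m <= 1.
  have S0 : 0 <= \sum_v a v 0 by apply: sumr_ge0 => v _; have /andP[] := Ha v.
  have S1 : \sum_v a v 0 <= n.+1%:R.
    rewrite -[X in _ <= X%:R]card_ord -sumr_const; apply: ler_sum => v _.
    by have /andP[] := Ha v.
  rewrite /m /mean; apply/andP; split; first by apply: divr_ge0.
  by rewrite ler_pdivrMr ?ltr0Sn // mul1r.
set e := a - (const_mx m : 'cV[R]_n.+1).
set f := invmx M *m e.
have Mconst : M *m (const_mx m : 'cV[R]_n.+1) = const_mx m.
  apply/matrixP => i j; rewrite (ord1 j) (@Mw_mul _ _ w) !mxE big1 ?addr0 // => u _.
  by rewrite !mxE subrr mulr0.
have Ef : f = c - const_mx m.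
  rewrite /f /e mulmxBr; congr (_ - _).
  by rewrite -[X in invmx M *m X]Mconst mulKmx.
have Cross : \sum_v (a v 0 - m) * b v 0 = dot f D.
  have -> : \sum_v (a v 0 - m) * b v 0 = dot (M *m f) b.
    rewrite /f mulKVmx // /dot; apply: eq_bigr => v _; rewrite /e !mxE.
    done.
  by rewrite -(@dot_sym_M _ _ _ Hw) MB.
have Sup : \sum_v ((D v 0 != 0)%:R : R) <= k%:R.
  apply: le_trans (_ : (l0norm D)%:R <= _); last by rewrite ler_nat.
  rewrite /l0norm -sumr_const [X in _ <= X]big_mkcond /=; apply: ler_sum => v _.
  by rewrite inE; case: (D v 0 != 0).
have CrossB : dot f D <= k%:R.
  apply: le_trans Sup; apply: ler_sum => v _.
  have /andP[? ?] : 0 <= c v 0 <= 1 := Hc v.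
  have /andP[? ?] := HD v; have /andP[? ?] := Hm.
  have Fv : f v 0 = c v 0 - m by rewrite Ef /c !mxE.
  rewrite Fv; case: eqP => [->|_] /=; first by rewrite mulr0.
  nra.
have Quad : dot b b <= k%:R.
  have H1 := @dot_pos _ _ _ Hw b; rewrite -/M MB in H1.
  have H2 : dot b D <= (dot b b + dot D D) / 2.
    rewrite /dot -big_split /= mulr_suml; apply: ler_sum => v _.
    have := sqr_ge0 (b v 0 - D v 0); rewrite expr2 => h; nra.
  have H3 : dot D D <= k%:R.
    apply: le_trans Sup; apply: ler_sum => v _.
    have /andP[? ?] := HD v.
    case: eqP => [->|_] /=; first by rewrite mulr0.
    nra.
  lra.
rewrite Ea pol_add Cross.
have Pb := @pol_le _ _ b.
have Pb' : polarization b <= k%:R.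
  apply: le_trans Pb _; apply: le_trans Quad; rewrite /dot.
  by apply: ler_sum => v _; rewrite expr2.
rewrite -mulr_natr; lra.
Qed.
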